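(* Let $f\in C_p(\mathbb{R})$ with $f(z)\ge0$ for all $z\in[0,1]$. Then $$H_tf(x)=\min_{z\in[0,1]}q_f(t,x;z)\quad\text{for all }(t,x)\in(0,\infty)\times[0,1].$$
   Context: $C_p(\mathbb{R})$ denotes the set of all continuous functions $f:\mathbb{R}\to\mathbb{R}$ periodic with period $1$ with $f(0)=0$. For such $f$, $q_f(t,x;z)=f(z)+\frac{1}{2t}(x-z)^2$ for $(t,x,z)\in(0,\infty)\times\mathbb{R}\times\mathbb{R}$, and $H_tf(x)=\inf_{z\in\mathbb{R}}q_f(t,x;z)$. *)

(* Defs.v *)
From HB Require Import structures.
From mathcomp Require Import all_boot all_order all_algebra.
From mathcomp Require Import all_classical all_reals all_analysis.
Set Implicit Arguments. Unset Strict Implicit. Unset Printing Implicit Defensive.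
Import Order.TTheory GRing.Theory Num.Theory.
Import numFieldNormedType.Exports.
Local Open Scope classical_set_scope.
Local Open Scope ring_scope.

Definition Cp (R : realType) (f : R -> R) : Prop :=
  continuous f /\ (forall x : R, f (x + 1) = f x) /\ f 0 = 0.

Definition qf (R : realType) (f : R -> R) (t x z : R) : R :=
  f z + (x - z) ^+ 2 / (2 * t).

Definition Ht (R : realType) (f : R -> R) (t x : R) : R :=
  inf [set qf f t x z | z in [set: R]].

(* Main.v *)
Require Import Defs.
From HB Require Import structures.
From mathcomp Require Import all_boot all_order all_algebra.
From mathcomp Require Import all_classical all_reals all_analysis.
From mathcomp Require Import lra.
Import Order.TTheory GRing.Theory Num.Theory.
Import numFieldNormedType.Exports.
Local Open Scope classical_set_scope.
Local Open Scope ring_scope.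

Lemma fpos (R : realType) (f : R -> R) :
  Cp f -> (forall z : R, z \in `[0, 1] -> 0 <= f z) -> forall z, 0 <= f z.
Proof.
move=> [_ [fp _]] f01.
have Hp : forall n : nat, forall z : R, 0 <= z <= n%:R + 1 -> 0 <= f z.
  elim=> [|n IH] z /andP[z0 z1].
    by apply: f01; rewrite in_itv /= z0; move: z1; rewrite mulr0n add0r.
  have [zl|zg] := lerP z 1; first by apply: f01; rewrite in_itv /= z0 zl.
  have -> : z = (z - 1) + 1 by rewrite subrK.
  rewrite fp; apply: IH; apply/andP; split; first by lra.
  by move: z1; rewrite -natr1; lra.
have Hn : forall n : nat, forall z : R, - n%:R <= z <= 1 -> 0 <= f z.
  elim=> [|n IH] z /andP[z0 z1].
    by apply: f01; rewrite in_itv /= z1 andbT; move: z0; rewrite oppr0.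
  have [zl|zg] := lerP 0 z; first by apply: f01; rewrite in_itv /= zl.
  rewrite -fp; apply: IH; apply/andP; split.
    by move: z0; rewrite -natr1; lra.
  by lra.
move=> z; have [z0|z0] := lerP 0 z.
  apply: (Hp (Num.bound z)); rewrite z0 /=.
  by apply: ler_wpDr => //; apply: ltW; apply: archi_boundP.
apply: (Hn (Num.bound (- z))); rewrite (ltW (lt_le_trans z0 ler01)) andbT.
rewrite lerNl; apply: ltW; apply: archi_boundP; rewrite oppr_ge0 ltW //.
Qed.

Theorem lemma4p1 (R : realType) (f : R -> R) :
  Cp f ->
  (forall z : R, z \in `[0, 1] -> 0 <= f z) ->
  forall t x : R, 0 < t -> x \in `[0, 1] ->
    exists2 z0 : R, z0 \in `[0, 1] &
      (forall z : R, z \in `[0, 1] -> qf f t x z0 <= qf f t x z) /\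
      Ht f t x = qf f t x z0.
Proof.
move=> Cf f01 t x t0 x01.
have fge := @fpos R f Cf f01.
have [cf [fp f0]] := Cf.
have cq : continuous (qf f t x).
  have h1 : continuous (fun z : R => x - z).
    by move=> z; apply: cvgB; [exact: cvg_cst | exact: cvg_id].
  have h2 : continuous (fun z : R => (x - z) * (x - z) * (2 * t)^-1).
    move=> z; apply: cvgM; last exact: cvg_cst.
    by apply: cvgM; apply: h1.
  have -> : qf f t x = f + (fun z : R => (x - z) * (x - z) * (2 * t)^-1).
    by apply/funext => z; rewrite /qf /= expr2.
  by move=> z; apply: continuousD; [exact: cf | exact: h2].
have [z0 z001 zmin] := EVT_min (@ler01 R) (continuous_subspaceT (fun z => cq z)).
have f1 : f 1 = 0 by rewrite -[1]add0r fp.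
have c0 : 0 < (2 * t)^-1 by rewrite invr_gt0 mulr_gt0.
move: x01; rewrite in_itv /= => /andP[x0 x1].
have allmin : forall z, qf f t x z0 <= qf f t x z.
  move=> z; have fz := fge z.
  have [zl|zg] := lerP 0 z; last first.
    apply: (le_trans (zmin 0 _)); first by rewrite in_itv /= lexx ler01.
    rewrite /qf f0 add0r.
    have h : (x - 0) ^+ 2 <= (x - z) ^+ 2 by rewrite !expr2; nra.
    have := ler_wpM2r (ltW c0) h; lra.
  have [zl1|zg1] := lerP z 1.
    by apply: zmin; rewrite in_itv /= zl zl1.
  apply: (le_trans (zmin 1 _)); first by rewrite in_itv /= lexx ler01.
  rewrite /qf f1 add0r.
  have h : (x - 1) ^+ 2 <= (x - z) ^+ 2 by rewrite !expr2; nra.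
  have := ler_wpM2r (ltW c0) h; lra.
exists z0 => //; split; first by move=> z _; apply: allmin.
apply/eqP; rewrite eq_le; apply/andP; split.
  apply: ge_inf; last by exists z0.
  by exists (qf f t x z0) => _ [z _ <-]; apply: allmin.
apply: lb_le_inf; first by exists (qf f t x z0), z0.
by move=> _ [z _ <-]; apply: allmin.
Qed.
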